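(* Let $G$ be a group acting linearly and isometrically on a real Hilbert space $M$. Let $X=t_0+\sigma\epsilon$ with $t_0\in M$, $\sigma>0$, $\mathbb{E}(\epsilon)=0$ and $\mathbb{E}(\|\epsilon\|^2)=1$, and let $[m_\star]$ be a Fréchet mean of $[X]$. Let $m_0$ be the orthogonal projection of $t_0$ onto $\mathrm{Fix}(M)$, and for $m\in M$ set $\nu(m)=\mathbb{E}\big(\sup_{g\in G}\langle g\cdot\epsilon,m/\|m\|\rangle\big)$ if $m\neq0$ and $\nu(0)=0$ (so $\nu(m)\in[0,1]$). Then $$d_Q([m_\star],[t_0])\le\sigma\nu(m_\star-m_0)+\sqrt{\sigma^2\nu(m_\star-m_0)^2+2\,\mathrm{dist}(t_0,\mathrm{Fix}(M))\,\sigma\,\nu(m_\star-m_0)}.$$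
   Context: $M$ is a real Hilbert space with inner product $\langle\cdot,\cdot\rangle$ and norm $\|\cdot\|$; the action is linear and isometric ($\|g\cdot x\|=\|x\|$). $\mathrm{Fix}(M)=\{x: g\cdot x=x\ \forall g\in G\}$ (a closed linear subspace). $[m]=\{g\cdot m:g\in G\}$, $d_Q([a],[b])=\inf_{g}\|g\cdot a-b\|$, $F(m)=\mathbb{E}\big(\inf_g\|g\cdot X-m\|^2\big)$, and $[m_\star]$ is a Fréchet mean of $[X]$ if $m_\star$ globally minimises $F$. *)

(* Defs.v *)
From HB Require Import structures.
From mathcomp Require Import all_boot all_order all_algebra.
From mathcomp Require Import all_classical all_reals all_analysis.
Set Implicit Arguments.
Unset Strict Implicit.
Unset Printing Implicit Defensive.
Import Order.TTheory GRing.Theory Num.Theory.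
Local Open Scope classical_set_scope.
Local Open Scope ring_scope.

Section Hilbert.
Variables (R : realType) (M : lmodType R) (ip : M -> M -> R).

Definition hnorm (x : M) : R := Num.sqrt (ip x x).

Definition is_real_hilbert : Prop :=
  [/\ (forall x y, ip x y = ip y x),
      (forall a x y z, ip (a *: x + y) z = a * ip x z + ip y z),
      (forall x, 0 <= ip x x),
      (forall x, ip x x = 0 -> x = 0) &
      (forall u : nat -> M,
          (forall e : R, 0 < e -> exists N : nat, forall n m : nat,
              (N <= n)%N -> (N <= m)%N -> hnorm (u n - u m) < e) ->
          exists l : M, forall e : R, 0 < e -> exists N : nat, forall n : nat,
              (N <= n)%N -> hnorm (u n - l) < e)].

Definition dist_to (t : M) (A : set M) : R := inf [set hnorm (t - y) | y in A].
End Hilbert.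

Definition is_lin_isom_group_action (R : realType) (M : lmodType R)
  (ip : M -> M -> R) (G : Type) (mul : G -> G -> G) (one : G) (inv : G -> G)
  (act : G -> M -> M) : Prop :=
  (forall a b c, mul a (mul b c) = mul (mul a b) c) /\
  (forall a, mul one a = a) /\
  (forall a, mul (inv a) a = one) /\
  (forall x, act one x = x) /\
  (forall g h x, act (mul g h) x = act g (act h x)) /\
  (forall g a x y, act g (a *: x + y) = a *: act g x + act g y) /\
  (forall g x, hnorm ip (act g x) = hnorm ip x).

Section Quotient.
Variables (R : realType) (M : lmodType R) (ip : M -> M -> R)
  (G : Type) (act : G -> M -> M).

Definition Fix : set M := [set x | forall g, act g x = x].

Definition dQ (a b : M) : R := inf [set hnorm ip (act g a - b) | g in [set: G]].

Variables (d : measure_display) (T : measurableType d) (P : probability T R).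

Definition frechetF (X : T -> M) (m : M) : \bar R :=
  (\int[P]_w ((dQ (X w) m) ^+ 2)%:E)%E.

Definition is_frechet_mean (X : T -> M) (mstar : M) : Prop :=
  forall m, (frechetF X mstar <= frechetF X m)%E.

Definition nu (eps : T -> M) (m : M) : R :=
  if m == 0 then 0 else
  fine (\int[P]_w (sup [set ip (act g (eps w)) ((hnorm ip m)^-1 *: m)
                        | g in [set: G]])%:E)%E.
End Quotient.

(* Main.v *)
Require Import Defs.
From HB Require Import structures.
From mathcomp Require Import all_boot all_order all_algebra.
From mathcomp Require Import all_classical all_reals all_analysis.
From mathcomp Require Import measurable_realfun.
From mathcomp Require Import ring lra.
Import Order.TTheory GRing.Theory Num.Theory.
Local Open Scope classical_set_scope.
Local Open Scope ring_scope.

Set Implicit Arguments. Unset Strict Implicit. Unset Printing Implicit Defensive.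
Section IP.
Variables (R : realType) (M : lmodType R) (ip : M -> M -> R).
Hypothesis H : is_real_hilbert ip.

Lemma ipC x y : ip x y = ip y x. Proof. by case: H. Qed.
Lemma ipL a x y z : ip (a *: x + y) z = a * ip x z + ip y z.
Proof. by case: H. Qed.
Lemma ipxx_ge0 x : 0 <= ip x x. Proof. by case: H. Qed.
Lemma ipxx0 x : ip x x = 0 -> x = 0. Proof. by case: H => _ _ _ h _; apply: h. Qed.
Lemma ip0l z : ip 0 z = 0.
Proof. have := ipL 1 0 0 z; rewrite scaler0 addr0 mul1r; lra. Qed.
Lemma ipDl x y z : ip (x + y) z = ip x z + ip y z.
Proof. by have := ipL 1 x y z; rewrite scale1r mul1r. Qed.
Lemma ipZl a x z : ip (a *: x) z = a * ip x z.
Proof. by have := ipL a x 0 z; rewrite addr0 ip0l addr0. Qed.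
Lemma ipNl x z : ip (- x) z = - ip x z.
Proof. by rewrite -scaleN1r ipZl mulN1r. Qed.
Lemma ipBl x y z : ip (x - y) z = ip x z - ip y z.
Proof. by rewrite ipDl ipNl. Qed.
Lemma ip0r z : ip z 0 = 0. Proof. by rewrite ipC ip0l. Qed.
Lemma ipDr x y z : ip z (x + y) = ip z x + ip z y.
Proof. by rewrite ipC ipDl !(ipC z). Qed.
Lemma ipZr a x z : ip z (a *: x) = a * ip z x.
Proof. by rewrite ipC ipZl ipC. Qed.
Lemma ipNr x z : ip z (- x) = - ip z x.
Proof. by rewrite ipC ipNl ipC. Qed.
Lemma ipBr x y z : ip z (x - y) = ip z x - ip z y.
Proof. by rewrite ipDr ipNr. Qed.

Lemma hnorm_ge0 x : 0 <= hnorm ip x. Proof. exact: sqrtr_ge0. Qed.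
Lemma hnorm2 x : hnorm ip x ^+ 2 = ip x x.
Proof. by rewrite /hnorm sqr_sqrtr // ipxx_ge0. Qed.

Lemma ip_le x y : 2 * ip x y <= ip x x + ip y y.
Proof.
have := ipxx_ge0 (x - y); rewrite !ipBl !ipBr (ipC y x); lra.
Qed.
Lemma ip_ge x y : - (ip x x + ip y y) <= 2 * ip x y.
Proof.
have := ipxx_ge0 (x + y); rewrite !ipDl !ipDr (ipC y x); lra.
Qed.

Lemma CS x y : ip x y ^+ 2 <= ip x x * ip y y.
Proof.
have [y0|yn0] := eqVneq (ip y y) 0.
  by rewrite (@ipxx0 y y0) !ip0r mulr0 expr0n.
have ypos : 0 < ip y y by rewrite lt_def yn0 ipxx_ge0.
set t := ip x y / ip y y.
have := ipxx_ge0 (x - t *: y).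
rewrite !ipBl !ipBr !ipZl !ipZr (ipC y x).
have e : t * ip y y = ip x y by rewrite /t mulfVK.
move=> h.
have : 0 <= ip x x * ip y y - ip x y ^+ 2.
  have -> : ip x x * ip y y - ip x y ^+ 2 =
     (ip x x - ip x y * t - (t * ip x y - t * (t * ip y y))) * ip y y.
    rewrite e; transitivity (ip x x * ip y y - ip x y * (t * ip y y)).
      by rewrite e; ring.
    ring.
  by apply: mulr_ge0; [lra | exact: ltW].
lra.
Qed.

Lemma ip_le_norm x y : ip x y <= hnorm ip x * hnorm ip y.
Proof.
have hc := CS x y.
have h0 : 0 <= hnorm ip x * hnorm ip y by apply: mulr_ge0; apply: hnorm_ge0.
have e : (hnorm ip x * hnorm ip y) ^+ 2 = ip x x * ip y y by rewrite exprMn !hnorm2.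
nra.
Qed.

Lemma hnorm_triangle x y : hnorm ip (x + y) <= hnorm ip x + hnorm ip y.
Proof.
have h := ip_le_norm x y.
have e : hnorm ip (x + y) ^+ 2 = ip x x + 2 * ip x y + ip y y.
  by rewrite hnorm2 !ipDl !ipDr (ipC y x); ring.
have := hnorm2 x; have := hnorm2 y; have := hnorm_ge0 x; have := hnorm_ge0 y;
have := hnorm_ge0 (x + y).
nra.
Qed.

End IP.

Section Act.
Variables (R : realType) (M : lmodType R) (ip : M -> M -> R)
  (G : Type) (mul : G -> G -> G) (one : G) (inv : G -> G) (act : G -> M -> M).
Hypothesis H : is_real_hilbert ip.
Hypothesis HA : is_lin_isom_group_action ip mul one inv act.

Lemma act1 x : act one x = x. Proof. by case: HA => _ [_ [_ [h _]]]. Qed.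
Lemma actM g h x : act (mul g h) x = act g (act h x).
Proof. by case: HA => _ [_ [_ [_ [h' _]]]]. Qed.
Lemma actL g a x y : act g (a *: x + y) = a *: act g x + act g y.
Proof. by case: HA => _ [_ [_ [_ [_ [h' _]]]]]. Qed.
Lemma act_norm g x : hnorm ip (act g x) = hnorm ip x.
Proof. by case: HA => _ [_ [_ [_ [_ [_ h']]]]]. Qed.
Lemma act_inv g x : act (inv g) (act g x) = x.
Proof. by rewrite -actM; case: HA => _ [_ [h' _]]; rewrite h' act1. Qed.
Lemma act_invr g x : act g (act (inv g) x) = x.
Proof.
have inj : injective (act (inv g)).
  by move=> a b e; rewrite -(act_inv (inv g) a) e act_inv.
by apply: inj; rewrite act_inv.
Qed.
Lemma act0 g : act g 0 = 0.
Proof.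
have h := actL g 1 0 0; rewrite !scale1r addr0 in h.
by apply: (addrI (act g 0)); rewrite addr0 -h.
Qed.
Lemma actD g x y : act g (x + y) = act g x + act g y.
Proof. by have := actL g 1 x y; rewrite !scale1r. Qed.
Lemma actZ g a x : act g (a *: x) = a *: act g x.
Proof. by have := actL g a x 0; rewrite !addr0 act0 addr0. Qed.
Lemma actN g x : act g (- x) = - act g x.
Proof. by rewrite -scaleN1r actZ scaleN1r. Qed.
Lemma actB g x y : act g (x - y) = act g x - act g y.
Proof. by rewrite actD actN. Qed.

Lemma act_ipxx g x : ip (act g x) (act g x) = ip x x.
Proof. by rewrite -!(hnorm2 H) act_norm. Qed.
Lemma act_ip g x y : ip (act g x) (act g y) = ip x y.
Proof.
have := act_ipxx g (x + y); rewrite actD !(ipDl H) !(ipDr H) !act_ipxx.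
rewrite (ipC H (act g y)) (ipC H y); lra.
Qed.
End Act.
Section Geom.
Variables (R : realType) (M : lmodType R) (ip : M -> M -> R)
  (G : Type) (mul : G -> G -> G) (one : G) (inv : G -> G) (act : G -> M -> M).
Hypothesis H : is_real_hilbert ip.
Hypothesis HA : is_lin_isom_group_action ip mul one inv act.

Lemma sup_ip_ub (x m : M) g :
  ip (act g x) m <= sup [set ip (act g x) m | g in [set: G]].
Proof.
apply: ub_le_sup; last by exists g.
exists ((ip x x + ip m m) / 2) => _ [h _ <-].
have := ip_le H (act h x) m; rewrite (act_ipxx H HA); lra.
Qed.

Lemma dQ_ge0 a b : 0 <= dQ ip act a b.
Proof.
apply: lb_le_inf; first by exists (hnorm ip (act one a - b)), one.
by move=> _ [g _ <-]; apply: hnorm_ge0.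
Qed.

Lemma dQ_le a b g : dQ ip act a b <= hnorm ip (act g a - b).
Proof.
apply: ge_inf; last by exists g.
by exists 0 => _ [h _ <-]; apply: hnorm_ge0.
Qed.

Lemma dQ_lb a b x : (forall g, x <= hnorm ip (act g a - b)) -> x <= dQ ip act a b.
Proof.
move=> hx; apply: lb_le_inf; first by exists (hnorm ip (act one a - b)), one.
by move=> _ [g _ <-].
Qed.

Variables (t0 mstar m0 : M).
Hypothesis Fm0 : Fix act m0.
Hypothesis orth : forall y, Fix act y -> ip (t0 - m0) y = 0.

Lemma dist_ge : hnorm ip (t0 - m0) <= dist_to ip t0 (Fix act).
Proof.
apply: lb_le_inf; first by exists (hnorm ip (t0 - m0)), m0.
move=> _ [y Fy <-]; apply: ler_wsqrtr.
have Fmy : Fix act (m0 - y) by move=> g; rewrite (actB HA) Fm0 Fy.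
have e : t0 - y = (t0 - m0) + (m0 - y) by rewrite addrA subrK.
have o := orth Fmy; rewrite e.
move: (t0 - m0) (m0 - y) o => a b o.
rewrite !(ipDl H) !(ipDr H) (ipC H b) o.
have := ipxx_ge0 H b; lra.
Qed.

Lemma dist_ge0 : 0 <= dist_to ip t0 (Fix act).
Proof. exact: le_trans (hnorm_ge0 _ _) dist_ge. Qed.

Lemma geom_K :
  dQ ip act mstar t0 ^+ 2 <=
  ip t0 t0 + ip mstar mstar - 2 * sup [set ip (act g t0) mstar | g in [set: G]].
Proof.
set D := dQ ip act mstar t0.
have D0 : 0 <= D by apply: dQ_ge0.
suff : sup [set ip (act g t0) mstar | g in [set: G]] <= (ip t0 t0 + ip mstar mstar - D ^+ 2) / 2 by lra.
apply: ge_sup; first by exists (ip (act one t0) mstar), one.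
move=> _ [h _ <-].
have hD := dQ_le mstar t0 (inv h).
have e : hnorm ip (act (inv h) mstar - t0) ^+ 2 =
   ip mstar mstar - 2 * ip (act h t0) mstar + ip t0 t0.
  rewrite -(act_norm HA h) (actB HA) (act_invr HA) (hnorm2 H).
  rewrite !(ipBl H) !(ipBr H) (act_ipxx H HA) (ipC H mstar); ring.
have : D ^+ 2 <= hnorm ip (act (inv h) mstar - t0) ^+ 2.
  by rewrite ler_pXn2r // ?nnegrE // hnorm_ge0.
lra.
Qed.

Lemma geom_c : hnorm ip (mstar - m0) <= dQ ip act mstar t0 + dist_to ip t0 (Fix act).
Proof.
suff : hnorm ip (mstar - m0) - dist_to ip t0 (Fix act) <= dQ ip act mstar t0 by lra.
apply: dQ_lb => g.
have e : hnorm ip (act g mstar - t0) = hnorm ip (mstar - act (inv g) t0).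
  by rewrite -(act_norm HA (inv g)) (actB HA) (act_inv HA).
rewrite e.
have e2 : mstar - m0 = (mstar - act (inv g) t0) + act (inv g) (t0 - m0).
  by rewrite (actB HA) Fm0 addrA subrK.
have tri := hnorm_triangle H (mstar - act (inv g) t0) (act (inv g) (t0 - m0)).
rewrite -e2 (act_norm HA) in tri.
have := dist_ge; lra.
Qed.
End Geom.

Section Geom2.
Variables (R : realType) (M : lmodType R) (ip : M -> M -> R)
  (G : Type) (mul : G -> G -> G) (one : G) (inv : G -> G) (act : G -> M -> M).
Hypothesis H : is_real_hilbert ip.
Hypothesis HA : is_lin_isom_group_action ip mul one inv act.

Lemma sup_ip_le (x m : M) :
  sup [set ip (act g x) m | g in [set: G]] <= (ip x x + ip m m) / 2.
Proof.
apply: ge_sup; first by exists (ip (act one x) m), one.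
move=> _ [h _ <-].
have := ip_le H (act h x) m; rewrite (act_ipxx H HA); lra.
Qed.

Lemma sup_ip_abs (x m : M) :
  `| sup [set ip (act g x) m | g in [set: G]] | <= ip x x + ip m m.
Proof.
have h1 := sup_ip_le x m.
have h2 := sup_ip_ub H HA x m one.
rewrite (act1 HA) in h2.
have h3 := ip_ge H x m.
have := ipxx_ge0 H x; have := ipxx_ge0 H m.
rewrite ler_norml; move=> *; apply/andP; split; lra.
Qed.

Lemma ip_abs (x m : M) : `| ip x m | <= ip x x + ip m m.
Proof.
have := ip_le H x m; have := ip_ge H x m.
have := ipxx_ge0 H x; have := ipxx_ge0 H m.
rewrite ler_norml; move=> *; apply/andP; split; lra.
Qed.
End Geom2.
Unset Implicit Arguments.
Theorem mainTheorem15 (R : realType) (M : lmodType R) (ip : M -> M -> R)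
  (G : Type) (mul : G -> G -> G) (one : G) (inv : G -> G) (act : G -> M -> M)
  (d : measure_display) (T : measurableType d) (P : probability T R)
  (t0 : M) (sigma : R) (eps : T -> M) (mstar m0 : M) :
  is_real_hilbert ip ->
  is_lin_isom_group_action ip mul one inv act ->
  0 < sigma ->
  (forall v, measurable_fun setT (fun w => ip (eps w) v)) ->
  measurable_fun setT (fun w => hnorm ip (eps w) ^+ 2) ->
  (forall m, measurable_fun setT
     (fun w => dQ ip act (t0 + sigma *: eps w) m ^+ 2)) ->
  (forall u, measurable_fun setT
     (fun w => sup [set ip (act g (eps w)) u | g in [set: G]])) ->
  (forall v, (\int[P]_w (ip (eps w) v)%:E = 0)%E) ->
  (\int[P]_w (hnorm ip (eps w) ^+ 2)%:E = 1)%E ->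
  is_frechet_mean ip act P (fun w => t0 + sigma *: eps w) mstar ->
  Fix act m0 -> (forall y, Fix act y -> ip (t0 - m0) y = 0) ->
  let n := nu ip act P eps (mstar - m0) in
  dQ ip act mstar t0 <=
    sigma * n + Num.sqrt (sigma ^+ 2 * n ^+ 2
                          + 2 * dist_to ip t0 (Fix act) * sigma * n).
Proof.
move=> Hh HA sig0 mip me2 mdQ mS Eip E2 Hfm Fm0 orth; cbv zeta.
set n := nu ip act P eps (mstar - m0).
pose c := hnorm ip (mstar - m0).
pose u := c^-1 *: (mstar - m0).
pose S := fun w => sup [set ip (act g (eps w)) u | g in [set: G]].
pose A := sup [set ip (act g t0) mstar | g in [set: G]].
pose K0 := ip t0 t0 + ip mstar mstar - 2 * A.
pose e2 := fun w => hnorm ip (eps w) ^+ 2.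
have e2E w : e2 w = ip (eps w) (eps w) by rewrite /e2 (hnorm2 Hh).
have e2ge0 w : 0 <= e2 w by rewrite /e2 sqr_ge0.
have c0 : 0 <= c by apply: hnorm_ge0.
have int_e2 : P.-integrable setT (EFin \o e2).
  apply/integrableP; split; first exact/measurable_EFinP.
  rewrite (eq_integral (fun x => (e2 x)%:E)); last first.
    by move=> x _ /=; rewrite ger0_norm.
  by rewrite E2 ltry.
have int_bd : forall (f : T -> R) (C k : R), measurable_fun setT f ->
    (forall w, `|f w| <= C * e2 w + k) -> P.-integrable setT (EFin \o f).
  move=> f C k mf hb.
  apply: (le_integrable measurableT (g := fun w => ((C%:E * (e2 w)%:E) + k%:E)%E)).
  - exact/measurable_EFinP.
  - move=> w _ /=; rewrite lee_fin.
    exact: le_trans (hb w) (ler_norm _).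
  - apply: integrableD => //; first exact: integrableZl.
    exact: finite_measure_integrable_cst.
have int_ip : forall v, P.-integrable setT (EFin \o (fun w => ip (eps w) v)).
  move=> v; apply: (int_bd _ 1 (ip v v)) => // w; rewrite mul1r e2E.
  exact: ip_abs Hh _ _.
have int_S : P.-integrable setT (EFin \o S).
  apply: (int_bd _ 1 (ip u u)); first exact: mS.
  move=> w; rewrite mul1r e2E; exact: sup_ip_abs Hh HA _ _.
pose nu' := fine (\int[P]_w (S w)%:E)%E.
have hS : (\int[P]_w (S w)%:E = nu'%:E)%E.
  by rewrite fineK // (integrable_fin_num measurableT int_S).
have nu0 : 0 <= nu'.
  have h : (\int[P]_w (ip (eps w) u)%:E <= \int[P]_w (S w)%:E)%E.
    apply: (le_integral measurableT (int_ip u) int_S).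
    move=> w _; rewrite lee_fin /S.
    have := sup_ip_ub Hh HA (eps w) u one; by rewrite (act1 HA).
  move: h; rewrite Eip hS.
  by change (((0:R)%:E <= nu'%:E)%E -> 0 <= nu'); rewrite lee_fin.
have hF := Hfm t0; rewrite /frechetF in hF.
pose a := fun w => dQ ip act (t0 + sigma *: eps w) mstar ^+ 2.
pose b := fun w => dQ ip act (t0 + sigma *: eps w) t0 ^+ 2.
have bbd w : b w <= sigma ^+ 2 * e2 w.
  rewrite /b e2E.
  have h := dQ_le ip act (t0 + sigma *: eps w) t0 one.
  rewrite (act1 HA) addrAC subrr add0r in h.
  have h2 : dQ ip act (t0 + sigma *: eps w) t0 ^+ 2 <= hnorm ip (sigma *: eps w) ^+ 2.
    by rewrite ler_pXn2r // ?nnegrE ?hnorm_ge0 // (dQ_ge0 ip one act).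
  by rewrite (hnorm2 Hh) (ipZl Hh) (ipZr Hh) mulrA -expr2 in h2.
have int_b : P.-integrable setT (EFin \o b).
  apply: (int_bd _ (sigma ^+ 2) 0); first exact: mdQ.
  move=> w; rewrite addr0 ger0_norm ?sqr_ge0 //; exact: bbd.
have int_e2s : P.-integrable setT (fun w => ((sigma ^+ 2)%:E * (e2 w)%:E)%E).
  exact: integrableZl.
have hb : (\int[P]_w (b w)%:E <= (sigma ^+ 2)%:E)%E.
  apply: le_trans (le_integral measurableT int_b int_e2s _) _.
    by move=> w _; rewrite /= -EFinM lee_fin bbd.
  by rewrite (integralZl measurableT int_e2) E2 mule1.
have int_a : P.-integrable setT (EFin \o a).
  apply/integrableP; split; first exact/measurable_EFinP/mdQ.
  rewrite (eq_integral (fun x => (a x)%:E)); last first.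
    by move=> x _ /=; rewrite ger0_norm // sqr_ge0.
  apply: le_lt_trans hF _; apply: le_lt_trans hb _; exact: ltry.
have mdecomp : mstar = c *: u + m0.
  have [c0eq|cn0] := eqVneq c 0.
    have hz : ip (mstar - m0) (mstar - m0) = 0 by rewrite -(hnorm2 Hh) -/c c0eq expr0n.
    have := ipxx0 Hh hz => /eqP; rewrite subr_eq0 => /eqP ->.
    by rewrite c0eq scale0r add0r.
  by rewrite /u scalerA mulfV // scale1r subrK.
pose v := (2 * sigma) *: (t0 - m0).
pose Lr := fun w => K0 + ip (eps w) v + sigma ^+ 2 * e2 w + (- (2 * sigma * c)) * S w.
have hL w : Lr w <= a w.
  pose X := t0 + sigma *: eps w.
  have hg : forall g, Lr w <= ip (act g X - mstar) (act g X - mstar).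
    move=> g; set x := eps w.
    have h1 := sup_ip_ub Hh HA t0 mstar g.
    have h2 := sup_ip_ub Hh HA x u g.
    have h2' : sigma * (c * ip (act g x) u) <= sigma * (c * S w).
      by apply: ler_wpM2l; [exact: ltW | apply: ler_wpM2l].
    have E1 : ip (act g X - mstar) (act g X - mstar) =
        ip X X - 2 * ip (act g X) mstar + ip mstar mstar.
      rewrite !(ipBl Hh) !(ipBr Hh) (act_ipxx Hh HA) (ipC Hh mstar); ring.
    have E2' : ip X X = ip t0 t0 + 2 * sigma * ip x t0 + sigma ^+ 2 * ip x x.
      rewrite /X !(ipDl Hh) !(ipDr Hh) !(ipZl Hh) !(ipZr Hh) (ipC Hh t0 x); ring.
    have E3 : ip (act g X) mstar = ip (act g t0) mstar + sigma * ip (act g x) mstar.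
      by rewrite /X (actD HA) (actZ HA) (ipDl Hh) (ipZl Hh).
    have E4 : ip (act g x) mstar = c * ip (act g x) u + ip x m0.
      rewrite {1}mdecomp (ipDr Hh) (ipZr Hh); congr (_ + _).
      by rewrite -{1}(Fm0 g) (act_ip Hh HA).
    have E5 : ip x v = 2 * sigma * (ip x t0 - ip x m0).
      by rewrite /v (ipZr Hh) (ipBr Hh).
    rewrite /Lr e2E E1 E2' E3 E4 E5 /K0 -/x.
    rewrite -/A in h1; rewrite -/S in h2'.
    lra.
  have [Lle0|Lgt0] := lerP (Lr w) 0.
    by apply: le_trans Lle0 _; rewrite /a sqr_ge0.
  have hs : Num.sqrt (Lr w) <= dQ ip act X mstar.
    by apply: (dQ_lb one) => g; rewrite /hnorm; apply: ler_wsqrtr; exact: hg.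
  rewrite -(sqr_sqrtr (ltW Lgt0)) /a -/X.
  by rewrite ler_pXn2r // ?nnegrE ?sqrtr_ge0 // (dQ_ge0 ip one act).
have int_c : P.-integrable setT (fun w : T => (K0%:E)%E).
  exact: (finite_measure_integrable_cst P K0 measurableT).
have iS2 : P.-integrable setT (fun w => ((- (2 * sigma * c))%:E * (S w)%:E)%E).
  exact: integrableZl.
have i1 : P.-integrable setT (fun w => (K0%:E + (ip (eps w) v)%:E)%E).
  by apply: integrableD => //; try exact: int_c; exact: (int_ip v).
have i2 : P.-integrable setT
    (fun w => (K0%:E + (ip (eps w) v)%:E + (sigma ^+ 2)%:E * (e2 w)%:E)%E).
  by apply: integrableD.
have eqL : (fun w => (Lr w)%:E) = (fun w => (K0%:E + (ip (eps w) v)%:E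
    + (sigma ^+ 2)%:E * (e2 w)%:E + (- (2 * sigma * c))%:E * (S w)%:E)%E).
  by apply/funext => w; rewrite /Lr !EFinD !EFinM.
have intL : P.-integrable setT (fun w => (Lr w)%:E).
  by rewrite eqL; apply: integrableD.
have IL : (\int[P]_w (Lr w)%:E = (K0 + sigma ^+ 2 - 2 * sigma * c * nu')%:E)%E.
  rewrite eqL (integralD measurableT i2 iS2) (integralD measurableT i1 int_e2s).
  rewrite (integralD measurableT int_c (int_ip v)).
  rewrite integral_cst // [X in (K0%:E * X)%E](_ : _ = 1%E); last exact: probability_setT.
  rewrite mule1 (Eip v) (integralZl measurableT int_e2) E2.
  rewrite (integralZl measurableT int_S) hS.
  rewrite adde0 mule1 -EFinM -!EFinD; congr (_%:E); ring.
have key : K0 + sigma ^+ 2 - 2 * sigma * c * nu' <= sigma ^+ 2.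
  rewrite -lee_fin -IL.
  apply: le_trans (le_integral measurableT intL int_a _) _.
    by move=> w _; rewrite /= lee_fin; exact: hL.
  exact: le_trans hF hb.
have gK := geom_K Hh HA t0 mstar.
rewrite -/A -/K0 in gK.
have gc := geom_c Hh HA mstar Fm0 orth.
rewrite -/c in gc.
have D0 := dQ_ge0 ip one act mstar t0.
have dl0 := dist_ge0 Hh HA Fm0 orth.
set D := dQ ip act mstar t0 in gK gc D0 *.
set dl := dist_to ip t0 (Fix act) in gc dl0 *.
have [e0|ne0] := eqVneq (mstar - m0) 0.
  have -> : n = 0 by rewrite /n /nu e0 eqxx.
  have c00 : c = 0 by rewrite /c e0 /hnorm (ip0l Hh) sqrtr0.
  rewrite c00 in key.
  have := sqrtr_ge0 (sigma ^+ 2 * 0 ^+ 2 + 2 * dl * sigma * 0).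
  nra.
have -> : n = nu' by rewrite /n /nu (negbTE ne0).
set s := Num.sqrt _.
have s0 : 0 <= s by apply: sqrtr_ge0.
have s2 : s ^+ 2 = sigma ^+ 2 * nu' ^+ 2 + 2 * dl * sigma * nu'.
  rewrite sqr_sqrtr //; apply: addr_ge0; first by apply: mulr_ge0; apply: sqr_ge0.
  have : 0 <= dl * sigma by apply: mulr_ge0 => //; apply: ltW.
  nra.
have h : 2 * sigma * nu' * c <= 2 * sigma * nu' * (D + dl).
  apply: ler_wpM2l => //; nra.
have hsn : 0 <= sigma * nu' by apply: mulr_ge0 => //; apply: ltW.
nra.
Qed.
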